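(* Let $b\in\{0,1\}^d$ be a bitmap and let $q\in\mathbb{R}^d$ be the effective gradient associated with $b$. Then there exists a bitmap $\bar b\ge b$ such that $q$ equals the simple gradient associated with $\bar b$.
   Context: Jackson network with a tree topology on nodes $\{1,\dots,d\}$, root node $1$; $i\to j$ means node $j$ is a child of node $i$. Customers arrive from outside only at node $1$, with rate $\lambda>0$. For $i\to j$, $\mu_{i,j}>0$ is the rate at which node $i$ serves customers and sends them to node $j$; $\mu_{i,0}\ge 0$ is the rate at which node $i$ serves customers who then leave the system. Let $\mu_i=\sum_{k:i\to k}\mu_{i,k}+\mu_{i,0}>0$. Arrival rates: $\Lambda_1=\lambda$ and $\Lambda_j=\Lambda_i\mu_{i,j}/\mu_i$ if $i\to j$. Utilities $\rho_i=\Lambda_i/\mu_i$, assumed to satisfy $\max_i\rho_i<1$; also $\lambda+\sum_i\mu_i=1$. Let $\mu'_{i,0}=\Lambda_i\mu_{i,0}/\mu_i$. A bitmap $b\in\{0,1\}^d$ encodes which nodes are nonempty ($b(i)=1$) or empty ($b(i)=0$); $b'\ge b$ means $b'(i)\ge b(i)$ for all $i$. Effective rates (defined recursively from the leaves up): $M_i(b)=\mu_i$ if $b(i)=1$, and $M_i(b)=\min\big(\mu_i,\ \sum_{k:i\to k}M_k(b)+\mu'_{i,0}\big)$ if $b(i)=0$. The effective gradient of $b$ is $q\in\mathbb{R}^d$ with $q(i)=2\log(\Lambda_i/M_i(b))$. Simple rates: $m_i(b)=\mu_i$ if $b(i)=1$, and $m_i(b)=\sum_{k:i\to k}m_k(b)+\mu'_{i,0}$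 if $b(i)=0$. The simple gradient of $b$ is $q$ with $q(i)=2\log(\Lambda_i/m_i(b))$. *)

(* Defs.v *)
From Stdlib Require Import Reals List Arith.
Import ListNotations.
Open Scope R_scope.

(* Nodes are the naturals 1..d; node 1 is the root.  The tree is given by a
   parent map [par]: for 2 <= j <= d, (par j) -> j, i.e. j is a child of par j.
   Index 0 is reserved for "outside": [mu i 0] is the exit rate of node i. *)

Definition is_node (d i : nat) : Prop := (1 <= i <= d)%nat.

Definition edge (d : nat) (par : nat -> nat) (i j : nat) : Prop :=
  (2 <= j <= d)%nat /\ par j = i.

Definition is_tree (d : nat) (par : nat -> nat) : Prop :=
  (1 <= d)%nat /\
  (forall j, (2 <= j <= d)%nat -> (1 <= par j <= d)%nat) /\
  (forall j, (1 <= j <= d)%nat -> exists n, Nat.iter n par j = 1%nat).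

Definition children (d : nat) (par : nat -> nat) (i : nat) : list nat :=
  filter (fun j => Nat.eqb (par j) i) (seq 2 (d - 1)).

Definition sumR (l : list nat) (f : nat -> R) : R :=
  fold_right (fun k acc => f k + acc) 0 l.

Definition muT (d : nat) (par : nat -> nat) (mu : nat -> nat -> R) (i : nat) : R :=
  sumR (children d par i) (mu i) + mu i 0%nat.

(* Arrival rates, root-down, computed with fuel (depth < d, so fuel d suffices). *)
Fixpoint LamF (d : nat) (par : nat -> nat) (mu : nat -> nat -> R) (lam : R)
  (fuel : nat) (j : nat) : R :=
  match fuel with
  | O => lam
  | S n => if Nat.eqb j 1 then lam
           else LamF d par mu lam n (par j) * mu (par j) j / muT d par mu (par j)
  end.

Definition Lam d par mu lam (j : nat) : R := LamF d par mu lam d j.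

Definition mu'0 d par mu lam (i : nat) : R :=
  Lam d par mu lam i * mu i 0%nat / muT d par mu i.

(* Effective rates, leaves-up, with fuel (subtree height < d, so fuel d suffices). *)
Fixpoint MeffF d par mu lam (b : nat -> bool) (fuel : nat) (i : nat) : R :=
  match fuel with
  | O => muT d par mu i
  | S n => if b i then muT d par mu i
           else Rmin (muT d par mu i)
                  (sumR (children d par i) (MeffF d par mu lam b n) + mu'0 d par mu lam i)
  end.

Definition Meff d par mu lam b (i : nat) : R := MeffF d par mu lam b d i.

Fixpoint msimF d par mu lam (b : nat -> bool) (fuel : nat) (i : nat) : R :=
  match fuel with
  | O => muT d par mu i
  | S n => if b i then muT d par mu i
           else sumR (children d par i) (msimF d par mu lam b n) + mu'0 d par mu lam i
  end.

Definition msim d par mu lam b (i : nat) : R := msimF d par mu lam b d i.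

Definition eff_gradient d par mu lam b (i : nat) : R :=
  2 * ln (Lam d par mu lam i / Meff d par mu lam b i).

Definition simple_gradient d par mu lam b (i : nat) : R :=
  2 * ln (Lam d par mu lam i / msim d par mu lam b i).

Definition network_assumptions (d : nat) (par : nat -> nat) (mu : nat -> nat -> R)
  (lam : R) : Prop :=
  is_tree d par /\
  0 < lam /\
  (forall i j, edge d par i j -> 0 < mu i j) /\
  (forall i, is_node d i -> 0 <= mu i 0%nat) /\
  (forall i, is_node d i -> 0 < muT d par mu i) /\
  (forall i, is_node d i -> Lam d par mu lam i / muT d par mu i < 1) /\
  lam + sumR (seq 1 d) (muT d par mu) = 1.

Definition bm_ge (d : nat) (b' b : nat -> bool) : Prop :=
  forall i, is_node d i -> b i = true -> b' i = true.

(* Main.v *)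
Require Import Defs.
From Stdlib Require Import Reals List Arith Lia Lra.
Open Scope R_scope.

Lemma min_exists (P : nat -> Prop) (dec : forall n, {P n} + {~ P n}) :
  (exists n, P n) -> exists n, P n /\ forall s, (s < n)%nat -> ~ P s.
Proof.
  intros [n Hn].
  assert (G : forall m, (forall s, (s < m)%nat -> ~ P s) \/
                        exists k, P k /\ forall s, (s < k)%nat -> ~ P s).
  { induction m.
    - left; intros; lia.
    - destruct IHm as [H|H]; [|right; exact H].
      destruct (dec m) as [Hm|Hm].
      + right; exists m; split; auto.
      + left; intros s Hs. destruct (Nat.eq_dec s m); [subst; auto|apply H; lia]. }
  destruct (G (S n)) as [H|H]; [exfalso; apply (H n); auto|exact H].
Qed.

Definition D (par : nat -> nat) (k t : nat) : Prop :=
  Nat.iter t par k = 1%nat /\ forall s, (s < t)%nat -> Nat.iter s par k <> 1%nat.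

Lemma D_child par k t c : D par k t -> par c = k -> c <> 1%nat -> D par c (S t).
Proof.
  intros [H1 H2] Hp Hc. split.
  - rewrite Nat.iter_succ_r, Hp; exact H1.
  - intros s Hs. destruct s as [|s']; [simpl; exact Hc|].
    rewrite Nat.iter_succ_r, Hp. apply H2; lia.
Qed.

Lemma D_exists d par k : is_tree d par -> is_node d k -> exists t, D par k t.
Proof.
  intros [_ [_ H]] Hk. destruct (min_exists (fun n => Nat.iter n par k = 1%nat)
    (fun n => Nat.eq_dec _ _) (H k Hk)) as [t Ht]. exists t; exact Ht.
Qed.

Lemma D_bound d par k t : is_tree d par -> is_node d k -> D par k t -> (t < d)%nat.
Proof.
  intros [Hd [Hp _]] Hk [H1 H2].
  assert (Hr : forall a, (a <= t)%nat -> (1 <= Nat.iter a par k <= d)%nat).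
  { induction a; intros Ha; [exact Hk|].
    simpl. apply Hp. assert (Nat.iter a par k <> 1%nat) by (apply H2; lia).
    specialize (IHa ltac:(lia)). lia. }
  set (l := map (fun a => Nat.iter a par k) (seq 0 (S t))).
  assert (Hnd : NoDup l).
  { apply NoDup_map_NoDup_ForallPairs; [|apply seq_NoDup].
    assert (W : forall a c, (a < c <= t)%nat -> Nat.iter a par k <> Nat.iter c par k).
    { intros a c Hac E. apply (H2 (t - c + a)%nat); [lia|].
      rewrite Nat.iter_add, E, <- Nat.iter_add.
      replace (t - c + c)%nat with t by lia. exact H1. }
    intros a c Ha Hc E. apply in_seq in Ha. apply in_seq in Hc.
    destruct (lt_eq_lt_dec a c) as [[L|L]|L]; auto.
    - exfalso; apply (W a c); [lia|exact E].
    - exfalso; apply (W c a); [lia|symmetry; exact E]. }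
  assert (Hi : incl l (seq 1 d)).
  { intros x Hx. unfold l in Hx. apply in_map_iff in Hx.
    destruct Hx as [a [<- Ha]]. apply in_seq in Ha. apply in_seq.
    specialize (Hr a ltac:(lia)). lia. }
  pose proof (NoDup_incl_length Hnd Hi).
  unfold l in H. rewrite length_map, !length_seq in H. lia.
Qed.

Lemma sumR_ext l f g : (forall x, In x l -> f x = g x) -> sumR l f = sumR l g.
Proof.
  induction l; intros H; simpl; [reflexivity|].
  rewrite H by (left; reflexivity). rewrite IHl; auto.
  intros; apply H; right; auto.
Qed.

Lemma children_in d par i c : In c (children d par i) -> (2 <= c <= d)%nat /\ par c = i.
Proof.
  unfold children. intros H. apply filter_In in H. destruct H as [H1 H2].
  apply in_seq in H1. apply Nat.eqb_eq in H2. lia.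
Qed.

Section Main.
Variables (d : nat) (par : nat -> nat) (mu : nat -> nat -> R) (lam : R).
Hypothesis Ht : is_tree d par.
Variable b : nat -> bool.

Lemma stab : forall n k t, is_node d k -> D par k t -> (d <= t + n)%nat ->
  forall m, (n <= m)%nat -> MeffF d par mu lam b m k = MeffF d par mu lam b n k.
Proof.
  induction n; intros k t Hk Hd Hle m Hm.
  - pose proof (D_bound d par k t Ht Hk Hd). lia.
  - destruct m as [|m]; [lia|]. simpl. destruct (b k); [reflexivity|].
    f_equal. f_equal. apply sumR_ext. intros c Hc.
    apply children_in in Hc. destruct Hc as [Hc Hp].
    apply (IHn c (S t)); [unfold is_node; lia| apply (D_child par k t c Hd Hp); lia | lia | lia].
Qed.

Definition bbar (i : nat) : bool :=
  b i || (if Rle_dec (muT d par mu i)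
            (sumR (children d par i) (MeffF d par mu lam b d) + mu'0 d par mu lam i)
          then true else false).

Lemma main_eq : forall n i t, is_node d i -> D par i t -> (d <= t + n)%nat -> (n <= d)%nat ->
  msimF d par mu lam bbar n i = MeffF d par mu lam b n i.
Proof.
  induction n; intros i t Hi Hd Hle Hn.
  - pose proof (D_bound d par i t Ht Hi Hd). lia.
  - simpl.
    assert (Hch : forall c, In c (children d par i) ->
       MeffF d par mu lam b d c = MeffF d par mu lam b n c /\
       msimF d par mu lam bbar n c = MeffF d par mu lam b n c).
    { intros c Hc. apply children_in in Hc. destruct Hc as [Hc Hp].
      assert (Dc : D par c (S t)) by (apply (D_child par i t c Hd Hp); lia).
      split.
      - apply (stab n c (S t)); [unfold is_node; lia|exact Dc|lia|lia].
      - apply (IHn c (S t)); [unfold is_node; lia|exact Dc|lia|lia]. }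
    unfold bbar. destruct (b i) eqn:Eb; simpl; [reflexivity|].
    rewrite (sumR_ext _ (MeffF d par mu lam b d) (MeffF d par mu lam b n))
      by (intros; apply Hch; auto).
    destruct (Rle_dec _ _) as [L|L].
    + unfold Rmin. destruct (Rle_dec _ _); [reflexivity|lra].
    + rewrite (sumR_ext _ (msimF d par mu lam bbar n) (MeffF d par mu lam b n))
        by (intros; apply Hch; auto).
      unfold Rmin. destruct (Rle_dec _ _); [lra|reflexivity].
Qed.

End Main.

Theorem mainTheorem1 (d : nat) (par : nat -> nat) (mu : nat -> nat -> R) (lam : R)
  (Hnet : network_assumptions d par mu lam) (b : nat -> bool) :
  exists bbar : nat -> bool,
    bm_ge d bbar b /\
    forall i, is_node d i ->
      eff_gradient d par mu lam b i = simple_gradient d par mu lam bbar i.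
Proof.
  destruct Hnet as [Ht _].
  exists (bbar d par mu lam b). split.
  - intros i _ H. unfold bbar. rewrite H. reflexivity.
  - intros i Hi. destruct (D_exists d par i Ht Hi) as [t Hd].
    unfold eff_gradient, simple_gradient, Meff, msim.
    rewrite (main_eq d par mu lam Ht b d i t Hi Hd); [reflexivity|lia|lia].
Qed.
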